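(* Let $r\ge3$. For every $d\in\{1,\dots,r-1\}$ there exists a simple Steiner bundle $\mathcal F_d$ on $\mathbb P^{r-1}$ that is $(d-1)$-homogeneous but not $d$-homogeneous.
   Context: $k$ algebraically closed of arbitrary characteristic; $A_n$ denotes an $n$-dimensional $k$-vector space with fixed basis, $A_e\subseteq A_r$ for $e\le r$, and $\mathbb P^{r-1}=\mathbb P(A_r)$. A Steiner bundle on $\mathbb P^{r-1}$ is a vector bundle $\mathcal F$ with an exact sequence $(0)\to\mathcal O_{\mathbb P^{r-1}}(-1)^s\to\mathcal O_{\mathbb P^{r-1}}^t\to\mathcal F\to(0)$. It is simple if its endomorphism ring is $k$. Every injective linear map $\alpha:A_{e+1}\to A_r$ induces a linear embedding $\hat\alpha:\mathbb P(A_{e+1})\to\mathbb P(A_r)$; a vector bundle $\mathcal F$ on $\mathbb P^{r-1}$ is $e$-homogeneous ($0\le e\le r-1$) if $\hat\alpha^*\mathcal F\cong\hat\beta^*\mathcal F$ for all injective linear maps $\alpha,\beta:A_{e+1}\to A_r$. *)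

(* Defs.v *)
From HB Require Import structures.
From mathcomp Require Export all_boot all_order all_algebra.
Set Implicit Arguments. Unset Strict Implicit. Unset Printing Implicit Defensive.
Export GRing.Theory.
Local Open Scope ring_scope.

Section Steiner.
Variable k : fieldType.

(* A morphism O(-1)^s -> O^t on P(A_n) is a t x s matrix of linear forms,
   given by its coefficient matrices M i (i < n):  M(x) = \sum_i x_i M_i. *)
Definition evalM n t s (M : 'I_n -> 'M[k]_(t, s)) (x : 'rV[k]_n) : 'M[k]_(t, s) :=
  \sum_(i < n) x 0 i *: M i.

(* The cokernel is a (Steiner) vector bundle iff M(x) is injective at every point. *)
Definition steiner n t s (M : 'I_n -> 'M[k]_(t, s)) : Prop :=
  forall x : 'rV[k]_n, x != 0 -> \rank (evalM M x) = s.

(* Pullback along the linear map alpha : A_{e+1} -> A_n, y |-> y *m a. *)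
Definition pullback e n t s (a : 'M[k]_(e.+1, n)) (M : 'I_n -> 'M[k]_(t, s))
  : 'I_e.+1 -> 'M[k]_(t, s) :=
  fun j => \sum_(i < n) a j i *: M i.

(* Isomorphism of the cokernels: GL_t x GL_s equivalence of the presentations. *)
Definition steiner_iso m t s (M N : 'I_m -> 'M[k]_(t, s)) : Prop :=
  exists (P : 'M[k]_t) (Q : 'M[k]_s),
    [/\ P \in unitmx, Q \in unitmx & forall j, P *m M j = N j *m Q].

(* End(F) = {(P,Q) | P M = M Q}; simple iff it consists of the scalars. *)
Definition steiner_simple n t s (M : 'I_n -> 'M[k]_(t, s)) : Prop :=
  forall (P : 'M[k]_t) (Q : 'M[k]_s), (forall i, P *m M i = M i *m Q) ->
    exists c : k, P = c%:M /\ Q = c%:M.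

Definition homogeneous e n t s (M : 'I_n -> 'M[k]_(t, s)) : Prop :=
  forall a b : 'M[k]_(e.+1, n), row_free a -> row_free b ->
    steiner_iso (pullback a M) (pullback b M).

End Steiner.

(* Main.v *)
Require Import Defs.
From HB Require Import structures.
From mathcomp Require Import all_boot all_order all_algebra ring.
Set Implicit Arguments. Unset Strict Implicit. Unset Printing Implicit Defensive.
Import GRing.Theory.
Local Open Scope ring_scope.

Section GenA.
Variable k : fieldType.

Lemma free_of_inj m n (A : 'M[k]_(m, n)) :
  (forall u : 'rV_m, u *m A = 0 -> u = 0) -> row_free A.
Proof.
move=> H; rewrite -kermx_eq0; apply/eqP/row_matrixP => i.
by rewrite row0; apply: H; rewrite -row_mul mulmx_ker row0.
Qed.

Lemma free_equiv m t (A B : 'M[k]_(m, t)) : row_free A -> row_free B ->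
  exists R, R \in unitmx /\ A *m R = B.
Proof.
move=> fA fB; have /row_freeP [A' AA'] := fA.
have rk : \rank (A *m (A' *m B)) = \rank A.
  by rewrite mulmxA AA' mul1mx (eqP fA) (eqP fB).
have [g ug e] := complete_unitmx rk.
by exists g; split => //; rewrite -e mulmxA AA' mul1mx.
Qed.

Lemma sum_delta n (f : 'I_n -> k) (j : 'I_n) :
  \sum_(i < n) f i * (j == i :> nat)%:R = f j.
Proof.
rewrite (bigD1 j) //= eqxx mulr1 big1 ?addr0 // => i ne.
by case: eqP => [e|]; [case/eqP: ne; apply/val_inj | rewrite mulr0].
Qed.

Lemma sum_delta0 n (f : 'I_n -> k) (m : nat) : (n <= m)%N ->
  \sum_(i < n) f i * (m == i :> nat)%:R = 0.
Proof.
move=> hm; rewrite big1 // => i _; case: eqP => [e|]; last by rewrite mulr0.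
by have := ltn_ord i; rewrite -e ltnNge hm.
Qed.

Lemma sum_deltaL N (f : 'I_N.+1 -> k) (c : bool) (i : nat) :
  \sum_(l < N.+1) (c && (l == i :> nat))%:R * f l = if c && (i <= N)%N then f (inord i) else 0.
Proof.
case: c => /=; last by rewrite big1 // => l _; rewrite mul0r.
case: leqP => hi.
  rewrite (bigD1 (inord i)) //= inordK // eqxx mul1r big1 ?addr0 // => l ne.
  case: eqP => e; last by rewrite mul0r.
  by case/eqP: ne; apply/val_inj; rewrite /= inordK.
rewrite big1 // => l _; case: eqP => e; last by rewrite mul0r.
by have := ltn_ord l; rewrite e ltnS leqNgt hi.
Qed.

Lemma sumD0 N (u : 'I_N.+1 -> k) (j : nat) :
  \sum_(i < N.+1) u i * (j == i :> nat)%:R = if (j <= N)%N then u (inord j) else 0.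
Proof.
rewrite -(sum_deltaL u true j) /=; apply: eq_bigr => i _.
by rewrite mulrC eq_sym.
Qed.

Lemma sumD1 N (u : 'I_N.+1 -> k) (j : nat) :
  \sum_(i < N.+1) u i * (j.+1 == i.+1 :> nat)%:R = if (j <= N)%N then u (inord j) else 0.
Proof. by rewrite -sumD0. Qed.

Lemma sumD1z N (u : 'I_N.+1 -> k) :
  \sum_(i < N.+1) u i * (0 == i.+1 :> nat)%:R = 0.
Proof. by rewrite big1 // => i _; rewrite mulr0. Qed.

Lemma bidiag N (u : 'I_N.+1 -> k) a b : (a != 0) || (b != 0) ->
  (forall j : nat, \sum_(i < N.+1) u i * (a * (j == i :> nat)%:R + b * (j == i.+1 :> nat)%:R) = 0) ->
  forall i, u i = 0.
Proof.
move=> nab H.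
have H' j : a * (\sum_(i < N.+1) u i * (j == i :> nat)%:R) +
            b * (\sum_(i < N.+1) u i * (j == i.+1 :> nat)%:R) = 0.
  rewrite !mulr_sumr -big_split /= -[RHS](H j); apply: eq_bigr => i _; ring.
suff S j : (j <= N)%N -> u (inord j) = 0 by move=> i; rewrite -(inord_val i) S // -ltnS.
have [a0|na] := eqVneq a 0.
  rewrite a0 eqxx /= in nab; move=> hj; have := H' j.+1.
  rewrite a0 mul0r add0r sumD1 hj => /eqP; rewrite mulf_eq0 (negbTE nab) /=.
  by move/eqP.
elim: j => [|j IH] hj.
  have := H' 0%N; rewrite sumD1z mulr0 addr0 sumD0 /= => /eqP.
  by rewrite mulf_eq0 (negbTE na) /= => /eqP.
have := H' j.+1; rewrite sumD0 hj sumD1 (ltnW hj) IH ?(ltnW hj) // mulr0 addr0.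
by move/eqP; rewrite mulf_eq0 (negbTE na) /= => /eqP.
Qed.

Lemma sumDD N (i l : nat) :
  \sum_(j < N.+1) (i == j :> nat)%:R * (l == j :> nat)%:R = ((i <= N)%N && (l == i))%:R :> k.
Proof.
under eq_bigr do rewrite mulrC.
rewrite (sumD0 (fun j : 'I_N.+1 => (l == j :> nat)%:R)).
by case: leqP => //= h; rewrite inordK.
Qed.

End GenA.

Section Gen.
Variable k : fieldType.

Definition Phi m t s (F : 'I_m -> 'M[k]_(t,s)) (Z : 'M[k]_(m, s)) : 'rV[k]_t :=
  \sum_i row i Z *m (F i)^T.

Lemma Phi_pull e m t s (a : 'M[k]_(e.+1, m)) (F : 'I_m -> 'M[k]_(t,s)) Y :
  Phi (pullback a F) Y = Phi F (a^T *m Y).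
Proof.
rewrite /Phi /pullback.
under eq_bigr do rewrite linear_sum mulmx_sumr.
rewrite exchange_big /=; apply: eq_bigr => i _.
rewrite row_mul (mulmx_sum_row (row i a^T)) mulmx_suml; apply: eq_bigr => j _.
by rewrite linearZ /= -scalemxAr -scalemxAl !mxE.
Qed.

Lemma Phi_inter m t s (F G : 'I_m -> 'M[k]_(t,s)) P Q :
  (forall j, P *m F j = G j *m Q) ->
  forall Y, Phi F Y *m P^T = Phi G (Y *m Q^T).
Proof.
move=> H Y; rewrite /Phi mulmx_suml; apply: eq_bigr => i _.
by rewrite -mulmxA -trmx_mul H trmx_mul row_mul !mulmxA.
Qed.

Lemma PhiZ m t s (F : 'I_m -> 'M[k]_(t,s)) c Y : Phi F (c *: Y) = c *: Phi F Y.
Proof.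
rewrite /Phi scaler_sumr; apply: eq_bigr => i _.
by rewrite linearZ /= -scalemxAl.
Qed.


Lemma Phi_delta m t s (F : 'I_m -> 'M[k]_(t,s)) (j : 'I_m) (v : 'rV[k]_s) :
  Phi F (\matrix_(j', l) ((j' == j)%:R * v 0 l)) = v *m (F j)^T.
Proof.
rewrite /Phi (bigD1 j) //= big1 ?addr0.
  by congr (_ *m _); apply/rowP => l; rewrite !mxE eqxx mul1r.
move=> i /negbTE ne; have -> : row i (\matrix_(j', l) ((j' == j)%:R * v 0 l)) = 0.
  by apply/rowP => l; rewrite !mxE ne mul0r.
by rewrite mul0mx.
Qed.

Lemma mx_ext_rows m t (A B : 'M[k]_(m, t)) :
  (forall v : 'rV_m, v *m A = v *m B) -> A = B.
Proof. by move=> H; apply/row_matrixP => i; rewrite !rowE H. Qed.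

End Gen.

Section Cons.
Variable k : fieldType.
Variables r' m : nat.
Local Notation r := r'.+1.
Local Notation n := m.+2.
Hypothesis hr : (n <= r)%N.

Definition kap1 : 'M[k]_(r, n.+1) := \matrix_(i, j) ((i < n)%N && (j == i :> nat))%:R.
Definition kap2 : 'M[k]_(r, n.+1) := \matrix_(i, j) ((i < n)%N && (j == i.+1 :> nat))%:R.
Definition Kmx := col_mx (mxvec kap1) (mxvec kap2).
Definition tt := \rank (cokermx Kmx).
Definition Bmx : 'M[k]_(r * n.+1, tt) := col_base (cokermx Kmx).
Definition Mf (i : 'I_r) : 'M[k]_(tt, n.+1) :=
  (\matrix_(j < n.+1, p < tt) Bmx (mxvec_index i j) p)^T.

Lemma PhiM Z : Phi Mf Z = mxvec Z *m Bmx.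
Proof.
rewrite mulmx_sum_row (reindex _ (curry_mxvec_bij r n.+1)) /=.
transitivity (\sum_(i < r) \sum_(j < n.+1) mxvec Z 0 (mxvec_index i j) *: row (mxvec_index i j) Bmx); last first.
  by rewrite pair_bigA; apply: eq_bigr => -[i j] _.
apply: eq_bigr => i _; rewrite /Mf trmxK mulmx_sum_row; apply: eq_bigr => j _.
rewrite mxvecE mxE; congr (_ *: _); apply/rowP => p; by rewrite !mxE.
Qed.

Lemma PhiM_eq0 Z : Phi Mf Z = 0 <-> exists a b, Z = a *: kap1 + b *: kap2.
Proof.
rewrite PhiM; split.
  move=> H.
  have : (mxvec Z <= Kmx)%MS.
    rewrite submxE -(mulmx_base (cokermx Kmx)) mulmxA -/Bmx H mul0mx //.
  case/submxP => D eZ.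
  move: eZ; rewrite -[D]hsubmxK mul_row_col [lsubmx D]mx11_scalar [rsubmx D]mx11_scalar.
  rewrite !mul_scalar_mx => eZ.
  exists (lsubmx D 0 0), (rsubmx D 0 0).
  by apply: (can_inj (@mxvecK _ _ _)); rewrite eZ linearD !linearZ.
case=> a [b ->].
apply: (row_free_inj (row_base_free (cokermx Kmx))).
rewrite mul0mx -mulmxA mulmx_base.
apply/eqP; rewrite -submxE linearD !linearZ /=.
apply: addmx_sub; apply: scalemx_sub; rewrite -addsmxE.
  exact: addsmxSl.
exact: addsmxSr.
Qed.


Lemma Phi_surj w : exists Z, Phi Mf Z = w.
Proof.
have /row_fullP [B' BB'] := col_base_full (cokermx Kmx).
exists (vec_mx (w *m B')); rewrite PhiM vec_mxK -mulmxA.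
by rewrite /Bmx BB' mulmx1.
Qed.

Lemma combE a b i j : (a *: kap1 + b *: kap2) i j =
  a * ((i < n)%N && (j == i :> nat))%:R + b * ((i < n)%N && (j == i.+1 :> nat))%:R.
Proof. by rewrite !mxE. Qed.

Lemma evalM_tr (x : 'rV[k]_r) (u : 'rV[k]_n.+1) :
  u *m (evalM Mf x)^T = Phi Mf (x^T *m u).
Proof.
rewrite /evalM /Phi linear_sum mulmx_sumr; apply: eq_bigr => i _.
rewrite linearZ /= -scalemxAr row_mul [row i x^T]mx11_scalar mul_scalar_mx.
by rewrite !mxE -scalemxAl.
Qed.

Lemma steinerM : steiner Mf.
Proof.
move=> x nx; rewrite -mxrank_tr; apply/eqP; change (row_free (evalM Mf x)^T).
apply: free_of_inj => u; rewrite evalM_tr => /PhiM_eq0 [a [b eZ]].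
have Ze i j : (x^T *m u) i j = x 0 i * u 0 j.
  by rewrite !mxE big_ord1 !mxE.
have h2 : (2 < n.+1)%N by [].
have h1r : (1 < r)%N by apply: leq_trans hr.
pose i0 : 'I_r := inord 0; pose i1 : 'I_r := inord 1.
pose j0 : 'I_n.+1 := inord 0; pose j1 : 'I_n.+1 := inord 1; pose j2 : 'I_n.+1 := inord 2.
have E i j : x 0 i * u 0 j = (a *: kap1 + b *: kap2) i j by rewrite -Ze eZ.
have vi0 : i0 = 0 :> nat by rewrite inordK.
have vi1 : i1 = 1 :> nat by rewrite inordK.
have vj0 : j0 = 0 :> nat by rewrite inordK.
have vj1 : j1 = 1 :> nat by rewrite inordK.
have vj2 : j2 = 2 :> nat by rewrite inordK.
have e00 := E i0 j0; have e11 := E i1 j1; have e01 := E i0 j1.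
have e10 := E i1 j0; have e02 := E i0 j2; have e12 := E i1 j2.
rewrite !combE ?vi0 ?vi1 ?vj0 ?vj1 ?vj2 /= in e00 e11 e01 e10 e02 e12.
rewrite ?mulr0 ?mulr1 ?addr0 ?add0r in e00 e11 e01 e10 e02 e12.
have a0 : a = 0.
  have : (x 0 i0 * u 0 j0) * (x 0 i1 * u 0 j1) = (x 0 i0 * u 0 j1) * (x 0 i1 * u 0 j0) by ring.
  rewrite e00 e11 e01 e10.
  by rewrite mulr0 => /eqP; rewrite mulf_eq0 orbb => /eqP.
have b0 : b = 0.
  have : (x 0 i0 * u 0 j1) * (x 0 i1 * u 0 j2) = (x 0 i0 * u 0 j2) * (x 0 i1 * u 0 j1) by ring.
  rewrite e01 e12 e02 e11.
  by rewrite mul0r => /eqP; rewrite mulf_eq0 orbb => /eqP.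
apply/rowP => j; rewrite mxE; apply/eqP; apply/negPn/negP => nuj.
move/negP: nx; apply; apply/eqP/rowP => i.
have := E i j; rewrite combE a0 b0 !mul0r addr0 => /eqP.
by rewrite mulf_eq0 (negbTE nuj) orbF mxE => /eqP.
Qed.


Lemma kap1M (R : 'M[k]_n.+1) i j :
  (kap1 *m R) i j = if (i < n)%N then R (inord i) j else 0.
Proof.
rewrite mxE; under eq_bigr do rewrite mxE.
rewrite sum_deltaL; case hi: (i < n)%N => //=.
by rewrite (ltnW hi).
Qed.

Lemma kap2M (R : 'M[k]_n.+1) i j :
  (kap2 *m R) i j = if (i < n)%N then R (inord i.+1) j else 0.
Proof.
rewrite mxE; under eq_bigr do rewrite mxE.
by rewrite sum_deltaL; case hi: (i < n)%N => //=.
Qed.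

Lemma ltr l : (l < n)%N -> (l < r)%N.
Proof. by move=> h; apply: leq_trans h hr. Qed.

Lemma kapR1 R a b : kap1 *m R = a *: kap1 + b *: kap2 -> forall (l : nat) j, (l < n)%N ->
  R (inord l) j = a * (j == l :> nat)%:R + b * (j == l.+1 :> nat)%:R.
Proof.
move=> H l j hl; have := congr1 (fun A : 'M[k]_(r, n.+1) => A (inord l) j) H.
by rewrite /= kap1M combE inordK ?ltr // hl.
Qed.

Lemma kapR2 R a b : kap2 *m R = a *: kap1 + b *: kap2 -> forall (l : nat) j, (l < n)%N ->
  R (inord l.+1) j = a * (j == l :> nat)%:R + b * (j == l.+1 :> nat)%:R.
Proof.
move=> H l j hl; have := congr1 (fun A : 'M[k]_(r, n.+1) => A (inord l) j) H.
by rewrite /= kap2M combE inordK ?ltr // hl.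
Qed.


Lemma k1_0 : Phi Mf kap1 = 0.
Proof. by apply/PhiM_eq0; exists 1, 0; rewrite scale1r scale0r addr0. Qed.

Lemma k2_0 : Phi Mf kap2 = 0.
Proof. by apply/PhiM_eq0; exists 0, 1; rewrite scale1r scale0r add0r. Qed.

Lemma simpleM : steiner_simple Mf.
Proof.
move=> P Q H; have HI := Phi_inter H.
set R := Q^T in HI.
have /PhiM_eq0 [a [b e1]] : Phi Mf (kap1 *m R) = 0 by rewrite -HI k1_0 mul0mx.
have /PhiM_eq0 [c [d e2]] : Phi Mf (kap2 *m R) = 0 by rewrite -HI k2_0 mul0mx.
have E (j : 'I_n.+1) : a * (j == 1%N :> nat)%:R + b * (j == 2%N :> nat)%:R =
           c * (j == 0%N :> nat)%:R + d * (j == 1%N :> nat)%:R.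
  by rewrite -(kapR1 e1) // -(kapR2 e2).
have E0 := E (inord 0); have E1 := E (inord 1); have E2 := E (inord 2).
rewrite !inordK // /= in E0 E1 E2.
rewrite ?mulr0 ?mulr1 ?addr0 ?add0r in E0 E1 E2.
have eR : R = a%:M.
  apply/matrixP => l j; rewrite [RHS]mxE.
  case: (ltnP l n) => hl.
    rewrite -[l]inord_val (kapR1 e1) // E2 mul0r addr0 mulr_natr.
    by rewrite inord_val eq_sym.
  have el : l = inord m.+2.
    by apply/val_inj; rewrite /= inordK //; apply/anti_leq; rewrite hl andbT -ltnS ltn_ord.
  rewrite el (kapR2 e2 (l:=m.+1)) // -E0 mul0r add0r -E1 mulr_natr.
  by rewrite -val_eqE /= inordK // eq_sym.
have eQ : Q = a%:M by rewrite -[Q]trmxK -/R eR tr_scalar_mx.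
exists a; split => //.
have eP : P^T = a%:M.
  apply/row_matrixP => i; rewrite !rowE mul_mx_scalar.
  have [Z <-] := Phi_surj (delta_mx 0 i).
  by rewrite HI eR mul_mx_scalar PhiZ.
by rewrite -[P]trmxK eP tr_scalar_mx.
Qed.


Lemma kernel_small (a : 'M[k]_(m.+1, r)) (Y : 'M[k]_(m.+1, n.+1)) :
  row_free a -> Phi Mf (a^T *m Y) = 0 -> Y = 0.
Proof.
move=> fa /PhiM_eq0 [al [be eZ]].
have [al0 be0] : al = 0 /\ be = 0.
  case: (boolP ((al != 0) || (be != 0))) => nab; last first.
    by move: nab; rewrite negb_or !negbK => /andP [/eqP -> /eqP ->].
  exfalso.
  pose L : 'M[k]_(n, r) := \matrix_(i, l) ((i < n)%N && (l == i :> nat))%:R.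
  pose X := L *m (a^T *m Y).
  have rX : (\rank X <= m.+1)%N.
    apply: leq_trans (mxrankM_maxr _ _) _; apply: leq_trans (mxrankM_maxl _ _) _.
    by rewrite mxrank_tr (eqP fa).
  have XE (i : 'I_n) j : X i j = al * (j == i :> nat)%:R + be * (j == i.+1 :> nat)%:R.
    rewrite /X eZ mxE; under eq_bigr do rewrite [L _ _]mxE.
    rewrite sum_deltaL ltn_ord /= -ltnS (leq_trans (ltn_ord i) hr) combE.
    by rewrite inordK ?ltr // ltn_ord.
  have fX : row_free X.
    apply: free_of_inj => u uX0; apply/rowP => i; rewrite mxE.
    apply: (bidiag (u := fun i => u 0 i) nab) => j.
    case: (ltnP j n.+1) => hj.
      have := congr1 (fun A : 'rV[k]_n.+1 => A 0 (inord j)) uX0.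
      rewrite /= [in RHS]mxE mxE => e; rewrite -[RHS]e; apply: eq_bigr => i' _; by rewrite XE inordK.
    rewrite big1 // => i' _.
    have h1 : (j == i' :> nat) = false.
      by apply/negbTE; rewrite neq_ltn (leq_trans (ltn_ord i') (ltnW hj)) orbT.
    have h2 : (j == i'.+1 :> nat) = false.
      by apply/negbTE; rewrite neq_ltn (@leq_trans n.+1 i'.+2 j (ltn_ord i') hj) orbT.
    by rewrite h1 h2 !mulr0 addr0 mulr0.
  by have := leq_trans (eq_leq (esym (eqP fX))) rX; rewrite ltnn.
move: eZ; rewrite al0 be0 !scale0r addr0 => eZ.
apply: trmx_inj; apply: (row_free_inj fa).
by rewrite trmx0 mul0mx -[a]trmxK -trmx_mul eZ trmx0.
Qed.


Lemma homogM : homogeneous m Mf.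
Proof.
move=> a b fa fb.
pose S (c : 'M[k]_(m.+1, r)) := lin_mx (mulmx c^T) *m Bmx.
have SE c Y : mxvec Y *m S c = Phi Mf (c^T *m Y).
  by rewrite /S mulmxA mul_vec_lin PhiM.
have Sfree c : row_free c -> row_free (S c).
  move=> fc; apply: free_of_inj => y.
  rewrite -[y]vec_mxK SE => /(kernel_small fc) ->.
  exact: linear0.
have [R [uR eR]] := free_equiv (Sfree _ fa) (Sfree _ fb).
have HR Y : Phi Mf (a^T *m Y) *m R = Phi Mf (b^T *m Y).
  by rewrite -!SE -mulmxA eR.
have HJ j : (pullback a Mf j)^T *m R = (pullback b Mf j)^T.
  apply: mx_ext_rows => v.
  rewrite mulmxA -!Phi_delta !Phi_pull.
  exact: HR.
exists R^T, 1%:M; split.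
- by rewrite unitmx_tr.
- exact: unitmx1.
move=> j; by rewrite mulmx1 -[pullback a Mf j]trmxK -trmx_mul HJ trmxK.
Qed.


Definition a0 : 'M[k]_(n, r) := \matrix_(j, i) (i == j :> nat)%:R.
Definition Y1 : 'M[k]_(n, n.+1) := \matrix_(j, l) (l == j :> nat)%:R.
Definition Y2 : 'M[k]_(n, n.+1) := \matrix_(j, l) (l == j.+1 :> nat)%:R.

Lemma trmulE p q (c : 'M[k]_(p, q)) (Y : 'M[k]_(p, n.+1)) i l :
  (c^T *m Y) i l = \sum_j c j i * Y j l.
Proof. by rewrite mxE; apply: eq_bigr => j _; rewrite mxE. Qed.

Lemma fa0 : row_free a0.
Proof.
apply: free_of_inj => u ua; apply/rowP => j.
have := congr1 (fun A : 'rV[k]_r => A 0 (inord j)) ua.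
rewrite /= !mxE; under eq_bigr do rewrite mxE.
have hj : (j <= m.+1)%N := ltn_ord j.
by rewrite inordK ?ltr // sumD0 hj inord_val.
Qed.

Lemma a0Y1 : a0^T *m Y1 = kap1.
Proof.
apply/matrixP => i l; rewrite trmulE [RHS]mxE.
under eq_bigr do rewrite !mxE.
by rewrite sumDD.
Qed.

Lemma a0Y2 : a0^T *m Y2 = kap2.
Proof.
apply/matrixP => i l; rewrite trmulE [RHS]mxE.
under eq_bigr do rewrite !mxE.
case: l => [[|l] hl] /=.
  by rewrite andbF big1 // => j _; rewrite mulr0.
by under eq_bigr do rewrite eqSS; rewrite sumDD.
Qed.

Lemma iso_Phi (a b : 'M[k]_(n, r)) P Q :
  (forall j, P *m pullback a Mf j = pullback b Mf j *m Q) ->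
  forall Y, Phi Mf (a^T *m Y) *m P^T = Phi Mf (b^T *m (Y *m Q^T)).
Proof. by move=> H Y; rewrite -!Phi_pull; apply: Phi_inter. Qed.

Lemma nonhom_shift : (n < r)%N -> ~ homogeneous m.+1 Mf.
Proof.
move=> hn H.
pose b1 : 'M[k]_(n, r) := \matrix_(j, i) (i == j.+1 :> nat)%:R.
have fb1 : row_free b1.
  apply: free_of_inj => u ua; apply/rowP => j.
  have := congr1 (fun A : 'rV[k]_r => A 0 (inord j.+1)) ua.
  rewrite /= !mxE; under eq_bigr do rewrite mxE.
  have hj : (j <= m.+1)%N := ltn_ord j.
  by rewrite inordK ?sumD1 ?hj ?inord_val // (leq_trans _ hn).
have [P [Q [uP uQ HPQ]]] := H a0 b1 fa0 fb1.
have HI := iso_Phi HPQ Y1.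
rewrite a0Y1 k1_0 mul0mx in HI.
have /PhiM_eq0 [al [be eZ]] := esym HI.
have row0 l : (b1^T *m (Y1 *m Q^T)) 0 l = 0.
  by rewrite mxE big1 // => j _; rewrite !mxE mul0r.
have h1 : (1 < n.+1)%N by [].
have al0 : al = 0.
  have := row0 0; rewrite eZ combE /= mulr1 mulr0 addr0 => ->. done.
have be0 : be = 0.
  have := row0 (inord 1); rewrite eZ combE /= inordK // mulr0 mulr1 add0r => ->. done.
rewrite al0 be0 !scale0r addr0 mulmxA in eZ.
have eZ' := congr1 (fun A => A *m invmx Q^T) eZ.
rewrite /= mulmxK ?unitmx_tr // mul0mx in eZ'.
have := congr1 (fun A : 'M[k]_(r, n.+1) => A (inord 1) 0) eZ'.
have v1 : (inord 1 : 'I_r) = 1%N :> nat by rewrite inordK ?ltr.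
rewrite /= trmulE [RHS]mxE.
under eq_bigr do rewrite !mxE v1 eqSS.
by rewrite sumDD /= => /eqP; rewrite oner_eq0.
Qed.


Definition sw (j : nat) : nat := if j == 0%N then 1%N else if j == 1%N then 0%N else j.

Lemma swK j : sw (sw j) = j.
Proof. by case: j => [|[|j]]. Qed.

Lemma sw_lt j : (j < n)%N -> (sw j < n)%N.
Proof. by case: j => [|[|j]]. Qed.

Lemma Y1M (R : 'M[k]_n.+1) (j : 'I_n) l : (Y1 *m R) j l = R (inord j) l.
Proof.
rewrite mxE; under eq_bigr do rewrite mxE.
by rewrite (sum_deltaL (fun c => R c l) true) /= (ltnW (ltn_ord j)).
Qed.

Lemma Y2M (R : 'M[k]_n.+1) (j : 'I_n) l : (Y2 *m R) j l = R (inord j.+1) l.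
Proof.
rewrite mxE; under eq_bigr do rewrite mxE.
by rewrite (sum_deltaL (fun c => R c l) true) /= (ltn_ord j).
Qed.

Definition b2 : 'M[k]_(n, r) := \matrix_(j, i) (sw i == j :> nat)%:R.

Lemma b2M (W : 'M[k]_(n, n.+1)) (i : 'I_r) l : (sw i < n)%N ->
  (b2^T *m W) i l = W (inord (sw i)) l.
Proof.
move=> h; rewrite trmulE; under eq_bigr do rewrite mxE mulrC.
have h' : (sw i <= m.+1)%N := h.
by rewrite (sumD0 (fun j => W j l)) h'.
Qed.

Lemma fb2 : row_free b2.
Proof.
apply: free_of_inj => u ua; apply/rowP => j.
have hs := sw_lt (ltn_ord j).
have := congr1 (fun A : 'rV[k]_r => A 0 (inord (sw j))) ua.
rewrite /= !mxE; under eq_bigr do rewrite mxE.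
have hj : (j <= m.+1)%N := ltn_ord j.
by rewrite inordK ?ltr // swK sumD0 hj inord_val.
Qed.

Lemma nonhom_swap : (1 <= m)%N -> ~ homogeneous m.+1 Mf.
Proof.
move=> hm H.
have [P [Q [uP uQ HPQ]]] := H a0 b2 fa0 fb2.
set R := Q^T in HPQ.
have HI1 := iso_Phi HPQ Y1.
rewrite a0Y1 k1_0 mul0mx in HI1.
have /PhiM_eq0 [al [be e1]] := esym HI1.
have HI2 := iso_Phi HPQ Y2.
rewrite a0Y2 k2_0 mul0mx in HI2.
have /PhiM_eq0 [ga [de e2]] := esym HI2.
have n3 : (3 <= n)%N by rewrite ltnS ltnS.
have E1 (i : nat) (l : 'I_n.+1) : (i < n)%N -> (sw i < n)%N ->
   R (inord (sw i)) l = al * (l == i :> nat)%:R + be * (l == i.+1 :> nat)%:R.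
  move=> h hs; have := congr1 (fun A : 'M[k]_(r, n.+1) => A (inord i) l) e1.
  have vi : (inord i : 'I_r) = i :> nat by rewrite inordK ?ltr.
  rewrite /= b2M; last by rewrite vi.
  rewrite vi Y1M combE vi h /= => <-.
  by rewrite inordK.
have E2 (i : nat) (l : 'I_n.+1) : (i < n)%N -> (sw i < n)%N ->
   R (inord (sw i).+1) l = ga * (l == i :> nat)%:R + de * (l == i.+1 :> nat)%:R.
  move=> h hs; have := congr1 (fun A : 'M[k]_(r, n.+1) => A (inord i) l) e2.
  have vi : (inord i : 'I_r) = i :> nat by rewrite inordK ?ltr.
  rewrite /= b2M; last by rewrite vi.
  rewrite vi Y2M combE vi h /= => <-.
  by rewrite inordK.
have F1 l := E1 0%N l isT isT.
have F2 l := E1 2%N l n3 n3.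
have G1 l := E2 1%N l isT isT.
have G2 l := E2 0%N l isT isT.
rewrite /= in F1 F2 G1 G2.
have H1 (l : 'I_n.+1) : al * (l == 0%N :> nat)%:R + be * (l == 1%N :> nat)%:R =
            ga * (l == 1%N :> nat)%:R + de * (l == 2%N :> nat)%:R by rewrite -F1 -G1.
have H2 (l : 'I_n.+1) : al * (l == 2%N :> nat)%:R + be * (l == 3%N :> nat)%:R =
            ga * (l == 0%N :> nat)%:R + de * (l == 1%N :> nat)%:R by rewrite -F2 -G2.
have l3 : (3 < n.+1)%N by rewrite ltnS.
have := H1 (inord 0); have := H2 (inord 0); have := H2 (inord 3).
rewrite !inordK //= ?mulr0 ?mulr1 ?addr0 ?add0r => be0 ga0 al0.
have R1 l : R (inord 1) l = 0 by rewrite F1 al0 be0 !mul0r addr0.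
have uR : R \in unitmx by rewrite unitmx_tr.
have e := mulmxV uR.
have := congr1 (fun A : 'M[k]_n.+1 => A (inord 1) (inord 1)) e.
rewrite /= !mxE eqxx big1 => [/eqP|c _]; last by rewrite R1 mul0r.
by rewrite eq_sym mulr1n oner_eq0.
Qed.

End Cons.

Theorem corollary5p2p2 (k : closedFieldType) (r : nat) :
  (3 <= r)%N ->
  forall d : nat, (1 <= d <= r.-1)%N ->
  exists (t s : nat) (M : 'I_r -> 'M[k]_(t, s)),
    [/\ steiner M, steiner_simple M, homogeneous d.-1 M & ~ homogeneous d M].
Proof.
case: r => [|r'] // hr [|m] // /andP [_ hd].
have hr2 : (m.+2 <= r'.+1)%N by [].
exists (tt k r' m), m.+3, (@Mf k r' m); split.
- exact: steinerM hr2.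
- exact: simpleM hr2.
- exact: homogM hr2.
case: (ltnP m.+2 r'.+1) => h.
  exact: nonhom_shift hr2 h.
have e : m.+2 = r'.+1 by apply/anti_leq; rewrite h hr2.
have hm : (1 <= m)%N by move: hr; rewrite -e.
exact: (nonhom_swap hr2 hm).
Qed.
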